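(* Let $\Gamma$ be an art gallery that is not normal. Then every configuration of guards in $\Gamma$ that visually covers the walls of $\Gamma$ but does not visually cover all of $\Gamma$ has at least three guards.
   Context: An art gallery $\Gamma$ is a simple polygon in the plane (closed region: boundary together with interior), whose boundary (the walls) consists of finitely many line segments. A guard is a point of $\Gamma$; a guard $G$ visually covers $A\in\Gamma$ if the segment $GA$ lies entirely in $\Gamma$. A configuration of guards is a finite set $F$ of points of $\Gamma$; it visually covers $X\subseteq\Gamma$ if each point of $X$ is visually covered by some guard in $F$. $\Gamma$ is normal if every configuration of guards visually covering the walls visually covers all of $\Gamma$. *)

(* Defs.v *)
From Stdlib Require Import Reals List Arith.
Import ListNotations.
Open Scope R_scope.

Definition point : Type := (R * R)%type.

Definition seg (a b x : point) : Prop :=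
  exists t : R, 0 <= t <= 1 /\
    x = ((1 - t) * fst a + t * fst b, (1 - t) * snd a + t * snd b).

(* a polygon is given by its cyclic list of vertices *)
Definition vtx (P : list point) (i : nat) : point :=
  nth (i mod length P) P (0, 0).

Definition edge (P : list point) (i : nat) (x : point) : Prop :=
  seg (vtx P i) (vtx P (S i)) x.

Definition walls (P : list point) (x : point) : Prop :=
  exists i, (i < length P)%nat /\ edge P i x.

Definition simple_polygon (P : list point) : Prop :=
  (3 <= length P)%nat /\
  (forall i, (i < length P)%nat -> vtx P i <> vtx P (S i)) /\
  (forall i j, (i < length P)%nat -> (j < length P)%nat -> i <> j ->
     forall x, edge P i x -> edge P j x ->
       (j = (S i) mod length P /\ x = vtx P (S i)) \/
       (i = (S j) mod length P /\ x = vtx P (S j))).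

Fixpoint clear_path (P : list point) (a : point) (l : list point) : Prop :=
  match l with
  | [] => True
  | b :: l' => (forall x, seg a b x -> ~ walls P x) /\ clear_path P b l'
  end.

Definition norm2 (p : point) : R := fst p * fst p + snd p * snd p.

(* p lies in the unbounded component of the complement of the walls *)
Definition exterior (P : list point) (p : point) : Prop :=
  ~ walls P p /\
  forall M : R, exists l : list point,
    clear_path P p l /\ M < norm2 (last l p).

(* the art gallery: closed region = walls together with interior
   = complement of the unbounded component of the complement of the walls *)
Definition gallery (P : list point) (x : point) : Prop := ~ exterior P x.

Definition covers_pt (P : list point) (g a : point) : Prop :=
  forall x, seg g a x -> gallery P x.

Definition covers (P : list point) (F : list point) (X : point -> Prop) : Prop :=
  forall a, X a -> exists g, In g F /\ covers_pt P g a.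

Definition guard_config (P : list point) (F : list point) : Prop :=
  Forall (gallery P) F.

Definition normal (P : list point) : Prop :=
  forall F, guard_config P F -> covers P F (walls P) -> covers P F (gallery P).

(* Main.v *)
Require Import Defs.
From Stdlib Require Import Reals List Arith Lra Lia Psatz Classical.
Import ListNotations.
Open Scope R_scope.

Definition lin (a d : point) (t : R) : point := (fst a + t * fst d, snd a + t * snd d).
Definition sub (b a : point) : point := (fst b - fst a, snd b - snd a).
Definition opp (d : point) : point := (- fst d, - snd d).
Definition dist2 (x y : point) : R :=
  (fst x - fst y) * (fst x - fst y) + (snd x - snd y) * (snd x - snd y).

Lemma pt_eq : forall x y : point, fst x = fst y -> snd x = snd y -> x = y.
Proof. intros [x1 x2] [y1 y2]; simpl; intros; subst; reflexivity. Qed.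

Lemma lin0 : forall a d, lin a d 0 = a.
Proof. intros; apply pt_eq; unfold lin; simpl; ring. Qed.
Lemma lin1 : forall a b, lin a (sub b a) 1 = b.
Proof. intros; apply pt_eq; unfold lin, sub; simpl; ring. Qed.
Lemma lin_opp : forall a d t, lin a (opp d) t = lin a d (-t).
Proof. intros; apply pt_eq; unfold lin, opp; simpl; ring. Qed.

Lemma seg_lin_between : forall a d al be ga,
  (al <= be <= ga \/ ga <= be <= al) -> seg (lin a d al) (lin a d ga) (lin a d be).
Proof.
  intros a d al be ga H.
  destruct (Req_dec al ga) as [E|E].
  - subst. exists 0. split; [lra|]. assert (be = ga) by lra. subst.
    apply pt_eq; unfold lin; simpl; ring.
  - set (t := (be - al) / (ga - al)).
    assert (Ht : t * (ga - al) = be - al) by (unfold t; field; lra).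
    exists t. split.
    + destruct H; split; nra.
    + replace be with (al + t * (ga - al)) by lra.
      apply pt_eq; unfold lin; simpl; ring.
Qed.

Lemma seg_lin_inv : forall a d al ga x, seg (lin a d al) (lin a d ga) x ->
  exists be, (al <= be <= ga \/ ga <= be <= al) /\ x = lin a d be.
Proof.
  intros a d al ga x [t [Ht Hx]]. exists ((1 - t) * al + t * ga). split.
  - destruct (Rle_dec al ga); [left|right]; split; nra.
  - subst. apply pt_eq; unfold lin; simpl; ring.
Qed.

Lemma seg_sym : forall a b x, seg a b x -> seg b a x.
Proof.
  intros a b x [t [Ht Hx]]. exists (1 - t). split; [lra|]. subst.
  apply pt_eq; simpl; ring.
Qed.

Lemma seg_to_lin : forall b a x, seg b a x -> exists s, 0 <= s <= 1 /\ x = lin a (sub b a) s.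
Proof.
  intros b a x [t [Ht Hx]]. exists (1 - t). split; [lra|]. subst.
  apply pt_eq; unfold lin, sub; simpl; ring.
Qed.

Lemma seg_left : forall a b, seg a b a.
Proof. intros. exists 0. split; [lra|]. apply pt_eq; simpl; ring. Qed.
Lemma seg_right : forall a b, seg a b b.
Proof. intros. exists 1. split; [lra|]. apply pt_eq; simpl; ring. Qed.

Lemma seg_sub : forall y b q x, seg y b q -> seg q y x -> seg y b x.
Proof.
  intros y b q x [t [Ht Hq]] [u [Hu Hx]]. exists ((1 - u) * t). split; [nra|].
  subst. apply pt_eq; simpl; ring.
Qed.

Lemma last_indep : forall (l : list point) x y, l <> [] -> last l x = last l y.
Proof.
  induction l as [|c l IH]; intros x y H; [congruence|].
  destruct l; simpl; auto. apply IH; discriminate.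
Qed.

Lemma last_cons : forall (l : list point) b q, last (b :: l) q = last l b.
Proof. intros. destruct l as [|c l]; [reflexivity|].
  change (last (c :: l) q = last (c :: l) b). apply last_indep; discriminate. Qed.

Lemma ext_nowall : forall P p, exterior P p -> ~ walls P p.
Proof. intros P p [H _]; exact H. Qed.

Lemma ext_prepend : forall P q b, exterior P b -> (forall x, seg q b x -> ~ walls P x) ->
  exterior P q.
Proof.
  intros P q b [Hb Hp] Hs. split.
  - apply Hs, seg_left.
  - intros M. destruct (Hp M) as [l [Hl HM]]. exists (b :: l). split.
    + simpl; auto.
    + rewrite last_cons; auto.
Qed.

Lemma ext_sub : forall P y b q, exterior P y -> (forall x, seg y b x -> ~ walls P x) ->
  seg y b q -> exterior P q.
Proof.
  intros P y b q Hy Hs Hq. apply (ext_prepend P q y Hy).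
  intros x Hx. apply Hs. eapply seg_sub; eauto.
Qed.

Lemma ext_back : forall P y b, exterior P y -> (forall x, seg y b x -> ~ walls P x) ->
  exterior P b.
Proof. intros. eapply ext_sub; eauto. apply seg_right. Qed.

Lemma quad_min : forall al be, 0 <= al -> exists s0, 0 <= s0 <= 1 /\
  forall s, 0 <= s <= 1 -> al * s0 * s0 + be * s0 <= al * s * s + be * s.
Proof.
  intros al be Hal.
  destruct (Req_dec al 0) as [E|E].
  - rewrite E. destruct (Rle_dec 0 be).
    + exists 0. split; [lra|]. intros s Hs. assert (0 <= be * s) by (apply Rmult_le_pos; lra). lra.
    + exists 1. split; [lra|]. intros s Hs. assert (0 <= (- be) * (1 - s)) by (apply Rmult_le_pos; lra). lra.
  - set (m := - be / (2 * al)).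
    assert (Hm : 2 * al * m = - be) by (unfold m; field; lra).
    destruct (Rle_dec m 0).
    + exists 0. split; [lra|]. intros s Hs.
      assert (0 <= be) by nra.
      assert (0 <= al * s * s) by (repeat apply Rmult_le_pos; lra).
      assert (0 <= be * s) by (apply Rmult_le_pos; lra). lra.
    + destruct (Rle_dec 1 m).
      * exists 1. split; [lra|]. intros s Hs.
        assert (be <= - 2 * al) by nra.
        assert (al * (s + 1) <= al * 2) by (apply Rmult_le_compat_l; lra).
        assert (0 <= (1 - s) * (- be - al * (s + 1))) by (apply Rmult_le_pos; lra).
        nra.
      * exists m. split; [lra|]. intros s Hs.
        assert (0 <= al * ((s - m) * (s - m))).
        { apply Rmult_le_pos; [lra|]. pose proof (Rle_0_sqr (s - m)) as Q; unfold Rsqr in Q; lra. }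
        replace be with (- (2 * al * m)) by lra.
        replace (al * s * s + - (2 * al * m) * s) with (al * ((s - m) * (s - m)) - al * m * m) by ring.
        replace (al * m * m + - (2 * al * m) * m) with (- (al * m * m)) by ring. lra.
Qed.

Lemma sq_pos1 : forall a b : R, a <> 0 -> 0 < a * a + b * b.
Proof. intros a b H. pose proof (Rsqr_pos_lt a H). pose proof (Rle_0_sqr b). unfold Rsqr in *. lra. Qed.

Lemma seg_closed : forall u v z, ~ seg u v z ->
  exists e, 0 < e /\ forall y, seg u v y -> e <= dist2 y z.
Proof.
  intros u v z Hz.
  set (D1 := fst v - fst u). set (D2 := snd v - snd u).
  set (w1 := fst u - fst z). set (w2 := snd u - snd z).
  destruct (quad_min (D1 * D1 + D2 * D2) (2 * (w1 * D1 + w2 * D2))) as [s0 [Hs0 Hmin]].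
  { nra. }
  set (q := ((1 - s0) * fst u + s0 * fst v, (1 - s0) * snd u + s0 * snd v)).
  exists (dist2 q z). split.
  - unfold dist2.
    destruct (Req_dec (fst q - fst z) 0) as [E1|E1];
    [destruct (Req_dec (snd q - snd z) 0) as [E2|E2]|].
    + exfalso. apply Hz. exists s0. split; [lra|].
      apply pt_eq; unfold q in *; simpl in *; lra.
    + rewrite Rplus_comm. apply sq_pos1; auto.
    + apply sq_pos1; auto.
  - intros y [s [Hs Hy]]. subst y. specialize (Hmin s Hs).
    unfold dist2, q; simpl. unfold D1, D2, w1, w2 in Hmin. clearbody q. nra.
Qed.

Lemma walls_closed : forall P z, ~ walls P z ->
  exists e, 0 < e /\ forall y, walls P y -> e <= dist2 y z.
Proof.
  intros P z Hz.
  assert (K : forall k, (k <= length P)%nat -> exists e, 0 < e /\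
            forall i y, (i < k)%nat -> edge P i y -> e <= dist2 y z).
  { induction k as [|k IH]; intros Hk.
    - exists 1. split; [lra|]. intros; lia.
    - destruct IH as [e1 [He1 H1]]; [lia|].
      assert (Hk' : ~ edge P k z) by (intro E; apply Hz; exists k; split; [lia|auto]).
      destruct (seg_closed _ _ _ Hk') as [e2 [He2 H2]].
      exists (Rmin e1 e2). split; [apply Rmin_glb_lt; auto|].
      intros i y Hi Hy. destruct (Nat.eq_dec i k) as [->|Ne].
      + eapply Rle_trans; [apply Rmin_r|]. apply H2; exact Hy.
      + eapply Rle_trans; [apply Rmin_l|]. apply (H1 i); auto; lia. }
  destruct (K (length P) (le_n _)) as [e [He H]].
  exists e. split; auto. intros y [i [Hi Hy]]. eapply H; eauto.
Qed.

Lemma small_delta : forall e nd, 0 < e -> 0 <= nd -> exists dl, 0 < dl /\ dl * dl * nd < e.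
Proof.
  intros e nd He Hnd. set (dl := Rmin 1 (e / (nd + 1))).
  assert (H1 : dl <= 1) by apply Rmin_l.
  assert (H2 : dl <= e / (nd + 1)) by apply Rmin_r.
  assert (H3 : 0 < dl) by (apply Rmin_glb_lt; [lra| apply Rdiv_lt_0_compat; lra]).
  assert (H4 : dl * (nd + 1) <= e).
  { apply (Rmult_le_compat_r (nd + 1)) in H2; [|lra].
    replace (e / (nd + 1) * (nd + 1)) with e in H2 by (field; lra). lra. }
  exists dl. split; auto. nra.
Qed.

Lemma nearest : forall P a d T, ~ walls P a -> 0 < T -> walls P (lin a d T) ->
  exists t0, 0 < t0 <= T /\ walls P (lin a d t0) /\
    forall t, 0 <= t < t0 -> ~ walls P (lin a d t).
Proof.
  intros P a d T Ha HT HwT.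
  set (E := fun x => exists t, 0 <= t /\ walls P (lin a d t) /\ x = - t).
  assert (Hb : bound E).
  { exists 0. intros x [t [Ht [_ ->]]]. lra. }
  assert (Hne : exists x, E x) by (exists (- T); exists T; repeat split; auto; lra).
  destruct (completeness E Hb Hne) as [m [Hub Hlub]].
  set (t0 := - m).
  assert (Hlow : forall t, 0 <= t -> walls P (lin a d t) -> t0 <= t).
  { intros t Ht Hw. assert (E (- t)) by (exists t; auto). specialize (Hub _ H). unfold t0; lra. }
  assert (Hnn : 0 <= t0).
  { assert (m <= 0); [apply Hlub; intros x [t [Ht [_ ->]]]; lra|]. unfold t0; lra. }
  assert (Happ : forall dl, 0 < dl -> exists t, 0 <= t /\ walls P (lin a d t) /\ t < t0 + dl).
  { intros dl Hdl. apply NNPP. intro Hn.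
    assert (m <= m - dl); [|lra].
    apply Hlub. intros x [t [Ht [Hw ->]]].
    destruct (Rle_dec (- t) (m - dl)); auto. exfalso. apply Hn. exists t.
    repeat split; auto. unfold t0; lra. }
  assert (Hw0 : walls P (lin a d t0)).
  { apply NNPP. intro Hn. destruct (walls_closed P _ Hn) as [e [He Hcl]].
    destruct (small_delta e (fst d * fst d + snd d * snd d) He) as [dl [Hdl Hdle]]; [nra|].
    destruct (Happ dl Hdl) as [t [Ht [Hw Htl]]].
    specialize (Hcl _ Hw). specialize (Hlow t Ht Hw).
    unfold dist2, lin in Hcl; simpl in Hcl.
    assert (Hdd: 0 <= fst d * fst d + snd d * snd d) by nra.
    assert ((t - t0) * (t - t0) <= dl * dl) by nra.
    assert ((t - t0) * (t - t0) * (fst d * fst d + snd d * snd d) <=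
            dl * dl * (fst d * fst d + snd d * snd d)) by (apply Rmult_le_compat_r; auto).
    nra. }
  exists t0. split; [split|split; auto].
  - destruct (Req_dec t0 0) as [Z|Z]; [|lra]. rewrite Z, lin0 in Hw0. contradiction.
  - apply Hlow; auto; lra.
  - intros t Ht Hw. specialize (Hlow t (proj1 Ht) Hw). lra.
Qed.

Lemma ray_hits : forall P a d, gallery P a -> ~ walls P a ->
  0 < fst d * fst d + snd d * snd d ->
  exists T, 0 < T /\ walls P (lin a d T).
Proof.
  intros P a d Hg Ha Hd. apply NNPP. intro Hn. apply Hg. split; auto.
  intros M.
  set (nd := fst d * fst d + snd d * snd d).
  set (ad := fst a * fst d + snd a * snd d).
  set (T := 1 + (Rabs M + 2 * Rabs ad) / nd).
  assert (HT1 : (T - 1) * nd = Rabs M + 2 * Rabs ad) by (unfold T; field; unfold nd; lra).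
  assert (HM := Rle_abs M). assert (Hadp := Rabs_pos ad). assert (HMp := Rabs_pos M).
  assert (Had : - Rabs ad <= ad) by (pose proof (Rle_abs (- ad)) as Q; rewrite Rabs_Ropp in Q; lra).
  assert (HT : 1 <= T).
  { assert (0 <= (T - 1) * nd) by lra. unfold nd in *. nra. }
  exists [lin a d T]. split.
  - simpl. split; auto. intros x Hx.
    rewrite <- (lin0 a d) in Hx at 1.
    destruct (seg_lin_inv _ _ _ _ _ Hx) as [be [Hbe ->]].
    destruct (Req_dec be 0) as [Z|Z].
    + rewrite Z, lin0; auto.
    + intro Hw. apply Hn. exists be. split; auto. lra.
  - simpl. unfold norm2, lin; simpl.
    assert (E : (fst a + T * fst d) * (fst a + T * fst d) + (snd a + T * snd d) * (snd a + T * snd d)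
      = fst a * fst a + snd a * snd a + 2 * T * ad + T * T * nd) by (unfold ad, nd; ring).
    rewrite E.
    assert (0 <= fst a * fst a + snd a * snd a).
    { pose proof (Rle_0_sqr (fst a)); pose proof (Rle_0_sqr (snd a)); unfold Rsqr in *; lra. }
    assert (Hnd : 0 < nd) by (unfold nd; lra). clearbody T ad nd.
    assert (T * nd = nd + Rabs M + 2 * Rabs ad) by lra.
    assert (T * ad >= - (T * Rabs ad)).
    { assert (T * (ad + Rabs ad) >= 0) by (apply Rle_ge, Rmult_le_pos; lra). lra. }
    assert (T * (nd + Rabs M) >= nd + Rabs M).
    { assert ((T - 1) * (nd + Rabs M) >= 0) by (apply Rle_ge, Rmult_le_pos; lra). lra. }
    replace (T * T * nd) with (T * (nd + Rabs M + 2 * Rabs ad)) by (rewrite <- H0; ring).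
    lra.
Qed.

Definition cr (u v : point) : R := fst u * snd v - snd u * fst v.
Definition cf (B C x : point) : R := cr (sub B x) (sub C x).
Definition DD (A B C : point) : R := cf B C A.
Definition inT (A B C x : point) : Prop :=
  0 <= DD A B C * cf B C x /\ 0 <= DD A B C * cf C A x /\ 0 <= DD A B C * cf A B x.

Lemma cf_sum : forall A B C x, cf B C x + cf C A x + cf A B x = DD A B C.
Proof. intros. unfold DD, cf, cr, sub; simpl; ring. Qed.

Lemma cf_x1 : forall A B C x, fst x * DD A B C =
  cf B C x * fst A + cf C A x * fst B + cf A B x * fst C.
Proof. intros. unfold DD, cf, cr, sub; simpl; ring. Qed.
Lemma cf_x2 : forall A B C x, snd x * DD A B C =
  cf B C x * snd A + cf C A x * snd B + cf A B x * snd C.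
Proof. intros. unfold DD, cf, cr, sub; simpl; ring. Qed.

Lemma DD_rot : forall A B C, DD B C A = DD A B C.
Proof. intros. unfold DD, cf, cr, sub; simpl; ring. Qed.

Lemma cf_aff : forall B C y b t,
  cf B C (lin y (sub b y) t) = (1 - t) * cf B C y + t * cf B C b.
Proof. intros. unfold cf, cr, sub, lin; simpl; ring. Qed.

Lemma side_lemma : forall A B C q, DD A B C <> 0 -> cf B C q = 0 ->
  0 <= DD A B C * cf C A q -> 0 <= DD A B C * cf A B q -> seg B C q.
Proof.
  intros A B C q HD H0 H1 H2.
  pose proof (cf_sum A B C q) as S. pose proof (cf_x1 A B C q) as X1.
  pose proof (cf_x2 A B C q) as X2.
  set (D := DD A B C) in *. set (b := cf C A q) in *. set (c := cf A B q) in *.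
  rewrite H0 in *.
  exists (c / D).
  assert (HDD : 0 < D * D) by (apply sq_pos1 with (b := 0) in HD; lra).
  assert (Ht : c / D * (D * D) = D * c) by (field; auto).
  split; [split|].
  - nra.
  - assert (c / D * (D * D) <= D * D) by nra. nra.
  - apply pt_eq; simpl.
    + apply (Rmult_eq_reg_r D); auto. rewrite X1. field_simplify; auto.
      replace b with (D - c) by lra. ring.
    + apply (Rmult_eq_reg_r D); auto. rewrite X2. field_simplify; auto.
      replace b with (D - c) by lra. ring.
Qed.

Definition tau (f0 f1 : R) : R := if Rlt_dec f1 0 then f0 / (f0 - f1) else 1.

Lemma tau_props : forall f0 f1, 0 <= f0 ->
  0 <= tau f0 f1 <= 1 /\ (f1 < 0 -> tau f0 f1 < 1) /\
  (forall t, 0 <= t <= tau f0 f1 -> t <= 1 -> 0 <= (1 - t) * f0 + t * f1) /\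
  (tau f0 f1 < 1 -> (1 - tau f0 f1) * f0 + tau f0 f1 * f1 = 0).
Proof.
  intros f0 f1 H0. unfold tau. destruct (Rlt_dec f1 0) as [L|L].
  - assert (Ht : f0 / (f0 - f1) * (f0 - f1) = f0) by (field; lra).
    set (t0 := f0 / (f0 - f1)) in *.
    split; [split; nra|]. split; [intros; nra|]. split.
    + intros t [Ht1 Ht2] _. nra.
    + intros _. nra.
  - split; [lra|]. split; [intros; lra|]. split.
    + intros t Ht _. nra.
    + intros; lra.
Qed.

Lemma crossing : forall A B C y b, DD A B C <> 0 -> inT A B C y -> ~ inT A B C b ->
  exists q, seg y b q /\ (seg B C q \/ seg C A q \/ seg A B q) .
Proof.
  intros A B C y b HD [Ya [Yb Yc]] Hb.
  set (D := DD A B C) in *.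
  set (a0 := D * cf B C y) in *. set (a1 := D * cf B C b).
  set (b0 := D * cf C A y) in *. set (b1 := D * cf C A b).
  set (c0 := D * cf A B y) in *. set (c1 := D * cf A B b).
  destruct (tau_props a0 a1 Ya) as [Ta1 [Ta2 [Ta3 Ta4]]].
  destruct (tau_props b0 b1 Yb) as [Tb1 [Tb2 [Tb3 Tb4]]].
  destruct (tau_props c0 c1 Yc) as [Tc1 [Tc2 [Tc3 Tc4]]].
  set (ts := Rmin (tau a0 a1) (Rmin (tau b0 b1) (tau c0 c1))).
  assert (Hsa : ts <= tau a0 a1) by apply Rmin_l.
  assert (Hsb : ts <= tau b0 b1) by (eapply Rle_trans; [apply Rmin_r|apply Rmin_l]).
  assert (Hsc : ts <= tau c0 c1) by (eapply Rle_trans; [apply Rmin_r|apply Rmin_r]).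
  assert (Hs0 : 0 <= ts).
  { unfold ts. apply Rmin_glb; [lra|apply Rmin_glb; lra]. }
  assert (Hs1 : ts < 1).
  { apply NNPP; intro N. apply Hb. unfold inT; fold D.
    split; [|split]; apply Rnot_lt_le; intro L.
    - specialize (Ta2 L); lra.
    - specialize (Tb2 L); lra.
    - specialize (Tc2 L); lra. }
  set (q := lin y (sub b y) ts).
  assert (Qa : D * cf B C q = (1 - ts) * a0 + ts * a1) by (unfold q, a0, a1; rewrite cf_aff; ring).
  assert (Qb : D * cf C A q = (1 - ts) * b0 + ts * b1) by (unfold q, b0, b1; rewrite cf_aff; ring).
  assert (Qc : D * cf A B q = (1 - ts) * c0 + ts * c1) by (unfold q, c0, c1; rewrite cf_aff; ring).
  assert (Pa : 0 <= D * cf B C q) by (rewrite Qa; apply Ta3; lra).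
  assert (Pb : 0 <= D * cf C A q) by (rewrite Qb; apply Tb3; lra).
  assert (Pc : 0 <= D * cf A B q) by (rewrite Qc; apply Tc3; lra).
  assert (Z : forall u, D * u = 0 -> u = 0).
  { intros u Hu. destruct (Rmult_integral _ _ Hu); auto. contradiction. }
  exists q. split.
  { exists ts. split; [lra|]. unfold q, lin, sub. apply pt_eq; simpl; ring. }
  assert (Hcase : ts = tau a0 a1 \/ ts = tau b0 b1 \/ ts = tau c0 c1).
  { unfold ts, Rmin. destruct (Rle_dec (tau b0 b1) (tau c0 c1));
    destruct (Rle_dec (tau a0 a1) _); auto. }
  destruct Hcase as [E|[E|E]].
  - left. apply (side_lemma A B C q HD); auto.
    apply Z. rewrite Qa, E. apply Ta4. lra.
  - right; left. apply (side_lemma B C A q); rewrite ?(DD_rot A B C); fold D; auto.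
    apply Z. rewrite Qb, E. apply Tb4. lra.
  - right; right. apply (side_lemma C A B q); rewrite ?(DD_rot B C A), ?(DD_rot A B C); fold D; auto.
    apply Z. rewrite Qc, E. apply Tc4. lra.
Qed.

Lemma jensen3 : forall la lb lc p q r, 0 <= la -> 0 <= lb -> 0 <= lc -> la + lb + lc = 1 ->
  (la * p + lb * q + lc * r) * (la * p + lb * q + lc * r) <= la * (p * p) + lb * (q * q) + lc * (r * r).
Proof.
  intros la lb lc p q r Ha Hb Hc S.
  assert (E : la * (p * p) + lb * (q * q) + lc * (r * r) - (la * p + lb * q + lc * r) * (la * p + lb * q + lc * r)
     = la * lb * ((p - q) * (p - q)) + la * lc * ((p - r) * (p - r)) + lb * lc * ((q - r) * (q - r))).
  { replace lc with (1 - la - lb) by lra. ring. }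
  assert (0 <= la * lb * ((p - q) * (p - q))) by (apply Rmult_le_pos; [apply Rmult_le_pos; auto | apply Rle_0_sqr]).
  assert (0 <= la * lc * ((p - r) * (p - r))) by (apply Rmult_le_pos; [apply Rmult_le_pos; auto | apply Rle_0_sqr]).
  assert (0 <= lb * lc * ((q - r) * (q - r))) by (apply Rmult_le_pos; [apply Rmult_le_pos; auto | apply Rle_0_sqr]).
  lra.
Qed.

Lemma inT_bound : forall A B C x, DD A B C <> 0 -> inT A B C x ->
  norm2 x <= norm2 A + norm2 B + norm2 C.
Proof.
  intros A B C x HD [Ha [Hb Hc]].
  pose proof (cf_sum A B C x) as S. pose proof (cf_x1 A B C x) as X1.
  pose proof (cf_x2 A B C x) as X2.
  set (D := DD A B C) in *.
  assert (HDD : 0 < D * D) by (apply sq_pos1 with (b := 0) in HD; lra).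
  assert (L : forall c, 0 <= D * c -> 0 <= c / D).
  { intros c Hc'. assert (E : c / D = (D * c) / (D * D)) by (field; auto). rewrite E.
    unfold Rdiv; apply Rmult_le_pos; auto; left; apply Rinv_0_lt_compat; auto. }
  set (la := cf B C x / D). set (lb := cf C A x / D). set (lc := cf A B x / D).
  assert (Sum : la + lb + lc = 1) by (unfold la, lb, lc; field_simplify; auto; rewrite S; field; auto).
  assert (E1 : fst x = la * fst A + lb * fst B + lc * fst C).
  { apply (Rmult_eq_reg_r D); auto. rewrite X1. unfold la, lb, lc. field; auto. }
  assert (E2 : snd x = la * snd A + lb * snd B + lc * snd C).
  { apply (Rmult_eq_reg_r D); auto. rewrite X2. unfold la, lb, lc. field; auto. }
  unfold norm2. rewrite E1, E2.
  assert (0 <= la) by (apply L; auto). assert (0 <= lb) by (apply L; auto). assert (0 <= lc) by (apply L; auto).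
  assert (la <= 1) by lra. assert (lb <= 1) by lra. assert (lc <= 1) by lra.
  pose proof (jensen3 la lb lc (fst A) (fst B) (fst C)) as J1.
  pose proof (jensen3 la lb lc (snd A) (snd B) (snd C)) as J2.
  assert (forall l v, 0 <= l <= 1 -> l * (v * v) <= v * v).
  { intros l v Hl. pose proof (Rle_0_sqr v). unfold Rsqr in *. nra. }
  pose proof (H5 la (fst A)). pose proof (H5 lb (fst B)). pose proof (H5 lc (fst C)).
  pose proof (H5 la (snd A)). pose proof (H5 lb (snd B)). pose proof (H5 lc (snd C)).
  unfold norm2. lra.
Qed.

Lemma escape : forall P A B C x, DD A B C <> 0 ->
  (forall y, seg A B y -> gallery P y) -> (forall y, seg B C y -> gallery P y) ->
  (forall y, seg C A y -> gallery P y) -> inT A B C x -> ~ exterior P x.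
Proof.
  intros P A B C x HD SAB SBC SCA Hin Hx.
  pose proof Hx as [Hxw Hp].
  destruct (Hp (norm2 A + norm2 B + norm2 C)) as [l [Hl HM]].
  clear Hp Hxw.
  revert x Hx Hin Hl HM. induction l as [|b l IH]; intros y Hye Hin Hl HM.
  - simpl in HM. pose proof (inT_bound A B C y HD Hin). lra.
  - destruct Hl as [Hseg Hl]. rewrite last_cons in HM.
    assert (Hbe : exterior P b) by (eapply ext_back; eauto).
    destruct (classic (inT A B C b)) as [Ib|Ib].
    + exact (IH b Hbe Ib Hl HM).
    + destruct (crossing A B C y b HD Hin Ib) as [q [Hq Hside]].
      pose proof (ext_sub P y b q Hye Hseg Hq) as Hqe.
      destruct Hside as [S|[S|S]].
      * apply (SBC q S Hqe).
      * apply (SCA q S Hqe).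
      * apply (SAB q S Hqe).
Qed.

Lemma inT_bary : forall A B C x al be ga, 0 <= al -> 0 <= be -> 0 <= ga -> al + be + ga = 1 ->
  x = (al * fst A + be * fst B + ga * fst C, al * snd A + be * snd B + ga * snd C) ->
  inT A B C x.
Proof.
  intros A B C x al be ga Ha Hb Hc S ->.
  assert (E1 : cf B C (al * fst A + be * fst B + ga * fst C, al * snd A + be * snd B + ga * snd C) = al * DD A B C)
    by (unfold DD, cf, cr, sub; simpl; replace ga with (1 - al - be) by lra; ring).
  assert (E2 : cf C A (al * fst A + be * fst B + ga * fst C, al * snd A + be * snd B + ga * snd C) = be * DD A B C)
    by (unfold DD, cf, cr, sub; simpl; replace ga with (1 - al - be) by lra; ring).
  assert (E3 : cf A B (al * fst A + be * fst B + ga * fst C, al * snd A + be * snd B + ga * snd C) = ga * DD A B C)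
    by (unfold DD, cf, cr, sub; simpl; replace ga with (1 - al - be) by lra; ring).
  unfold inT. rewrite E1, E2, E3.
  pose proof (Rle_0_sqr (DD A B C)). unfold Rsqr in *.
  split; [|split]; rewrite Rmult_comm, Rmult_assoc; apply Rmult_le_pos; auto.
Qed.

Lemma chord : forall P a g x, gallery P a -> ~ walls P a -> seg g a x -> exterior P x ->
  exists d t0 t1, 0 < t0 /\ 0 < t1 /\ 0 < fst d * fst d + snd d * snd d /\
    walls P (lin a d t0) /\ walls P (lin a d (- t1)) /\
    (forall r, - t1 <= r <= t0 -> ~ exterior P (lin a d r)) /\
    seg g (lin a d t0) x /\ seg g (lin a d (- t1)) x /\ g = lin a d 1.
Proof.
  intros P a g x Hga Hwa Hs Hx.
  destruct (seg_to_lin g a x Hs) as [s2 [Hs2 Ex]].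
  remember (sub g a) as d eqn:Hd.
  assert (Hnd : 0 < fst d * fst d + snd d * snd d).
  { destruct (Req_dec (fst d) 0) as [E1|E1]; [destruct (Req_dec (snd d) 0) as [E2|E2]|].
    - exfalso. apply Hga. assert (Exa : x = a) by (rewrite Ex; apply pt_eq; unfold lin; simpl; rewrite ?E1, ?E2; ring). rewrite <- Exa; auto.

    - rewrite Rplus_comm. apply sq_pos1; auto.
    - apply sq_pos1; auto. }
  destruct (classic (exists y, seg a x y /\ walls P y)) as [[y [Hy Hwy]]|Hno].
  2:{ exfalso. apply Hga. apply (ext_prepend P a x Hx). intros y Hy Hw. apply Hno; eauto. }
  rewrite Ex in Hy. rewrite <- (lin0 a d) in Hy at 1.
  destruct (seg_lin_inv _ _ _ _ _ Hy) as [be [Hbe Ey]]. rewrite Ey in Hwy.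
  assert (Hbe0 : be <> 0) by (intro Z; rewrite Z, lin0 in Hwy; contradiction).
  assert (Hbp : 0 < be) by lra.
  destruct (nearest P a d be Hwa Hbp Hwy) as [t0 [Ht0 [Hw0 Hn0]]].
  assert (Hnd' : 0 < fst (opp d) * fst (opp d) + snd (opp d) * snd (opp d)) by (unfold opp; simpl; lra).
  destruct (ray_hits P a (opp d) Hga Hwa Hnd') as [T [HT HwT]].
  destruct (nearest P a (opp d) T Hwa HT HwT) as [t1 [Ht1 [Hw1 Hn1]]].
  rewrite lin_opp in Hw1.
  assert (Hnw : forall r, - t1 < r < t0 -> ~ walls P (lin a d r)).
  { intros r Hr. destruct (Rle_dec 0 r).
    - apply Hn0; lra.
    - specialize (Hn1 (- r)). rewrite lin_opp, Ropp_involutive in Hn1. apply Hn1; lra. }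
  assert (Hg : g = lin a d 1) by (rewrite Hd, lin1; auto).
  exists d, t0, t1. split; [lra|]. split; [lra|]. split; [auto|]. split; [auto|]. split; [auto|].
  split; [|split; [|split; auto]].
  - intros r Hr He.
    destruct (Req_dec r t0) as [->|N0]; [apply (ext_nowall _ _ He Hw0)|].
    destruct (Req_dec r (- t1)) as [->|N1]; [apply (ext_nowall _ _ He Hw1)|].
    apply Hga. apply (ext_prepend P a _ He). intros y0 Hy0.
    rewrite <- (lin0 a d) in Hy0 at 1.
    destruct (seg_lin_inv _ _ _ _ _ Hy0) as [b2 [Hb2 ->]]. apply Hnw. lra.
  - rewrite Hg, Ex. apply seg_lin_between. lra.
  - rewrite Hg, Ex. apply seg_lin_between. lra.
Qed.

Lemma final_tri : forall P a d t0 t1 g1 x1, 0 < t0 -> 0 < t1 ->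
  0 < fst d * fst d + snd d * snd d ->
  (forall r, - t1 <= r <= t0 -> ~ exterior P (lin a d r)) ->
  covers_pt P g1 (lin a d t0) -> covers_pt P g1 (lin a d (- t1)) ->
  seg g1 a x1 -> exterior P x1 -> False.
Proof.
  intros P a d t0 t1 g1 x1 Ht0 Ht1 Hnd Hch Cp Cw Hs Hx.
  destruct (seg_to_lin g1 a x1 Hs) as [s [Hs1 Ex]].
  remember (sub g1 a) as e eqn:He.
  destruct (Req_dec (cr e d) 0) as [Z|Z].
  - set (ga := (fst e * fst d + snd e * snd d) / (fst d * fst d + snd d * snd d)).
    assert (K1 : fst e * (fst d * fst d + snd d * snd d) = (fst e * fst d + snd e * snd d) * fst d).
    { replace (fst e * (fst d * fst d + snd d * snd d)) with
        ((fst e * fst d + snd e * snd d) * fst d + snd d * cr e d) by (unfold cr; ring).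
      rewrite Z; ring. }
    assert (K2 : snd e * (fst d * fst d + snd d * snd d) = (fst e * fst d + snd e * snd d) * snd d).
    { replace (snd e * (fst d * fst d + snd d * snd d)) with
        ((fst e * fst d + snd e * snd d) * snd d - fst d * cr e d) by (unfold cr; ring).
      rewrite Z; ring. }
    assert (G1 : fst e = ga * fst d).
    { unfold ga. replace ((fst e * fst d + snd e * snd d) / (fst d * fst d + snd d * snd d) * fst d)
        with ((fst e * fst d + snd e * snd d) * fst d / (fst d * fst d + snd d * snd d)) by (field; lra).
      rewrite <- K1. field; lra. }
    assert (G2 : snd e = ga * snd d).
    { unfold ga. replace ((fst e * fst d + snd e * snd d) / (fst d * fst d + snd d * snd d) * snd d)
        with ((fst e * fst d + snd e * snd d) * snd d / (fst d * fst d + snd d * snd d)) by (field; lra).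
      rewrite <- K2. field; lra. }
    assert (Eg : g1 = lin a d ga).
    { apply pt_eq; unfold lin; simpl; rewrite He in G1, G2; unfold sub in G1, G2; simpl in G1, G2; lra. }
    assert (Ex' : x1 = lin a d (s * ga)).
    { rewrite Ex. apply pt_eq; unfold lin; simpl; rewrite ?G1, ?G2; ring. }
    set (r := s * ga) in *.
    destruct (Rle_dec (- t1) r); [destruct (Rle_dec r t0)|].
    + apply (Hch r); [lra|]. rewrite <- Ex'; auto.
    + assert (0 < ga) by (destruct (Rle_dec ga 0); [assert (s * ga <= 0) by nra; unfold r in *; lra|lra]).
      assert (r <= ga) by (unfold r; nra).
      apply (Cp x1); auto. rewrite Eg, Ex'. apply seg_lin_between. lra.
    + assert (ga < 0) by (destruct (Rle_dec 0 ga); [assert (0 <= s * ga) by nra; unfold r in *; lra|lra]).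
      assert (ga <= r) by (unfold r; nra).
      apply (Cw x1); auto. rewrite Eg, Ex'. apply seg_lin_between. lra.
  - set (p := lin a d t0). set (w := lin a d (- t1)).
    assert (HD : DD g1 p w <> 0).
    { assert (E : DD g1 p w = (t0 + t1) * cr e d) by (rewrite He; unfold DD, cf, cr, p, w, sub, lin; simpl; ring).
      rewrite E. apply Rmult_integral_contrapositive_currified; lra. }
    apply (escape P g1 p w x1 HD).
    + intros y Hy. apply Cp; auto.
    + intros y Hy. unfold p, w in Hy. destruct (seg_lin_inv _ _ _ _ _ Hy) as [b2 [Hb2 ->]].
      apply Hch. lra.
    + intros y Hy. apply Cw. apply seg_sym; auto.
    + apply (inT_bary g1 p w x1 s ((1 - s) * t1 / (t0 + t1)) ((1 - s) * t0 / (t0 + t1))).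
      * lra.
      * unfold Rdiv. apply Rmult_le_pos; [nra|left; apply Rinv_0_lt_compat; lra].
      * unfold Rdiv. apply Rmult_le_pos; [nra|left; apply Rinv_0_lt_compat; lra].
      * field. lra.
      * rewrite Ex, He. apply pt_eq; unfold p, w, lin, sub; simpl; field; lra.
    + auto.
Qed.

Lemma not_cov : forall P g a, ~ covers_pt P g a -> exists x, seg g a x /\ exterior P x.
Proof.
  intros P g a H. apply NNPP. intro N. apply H. intros x Hx He. apply N. eauto.
Qed.

Theorem mainTheorem4 (P : list point) :
  simple_polygon P -> ~ normal P ->
  forall F : list point, NoDup F -> guard_config P F ->
    covers P F (walls P) -> ~ covers P F (gallery P) ->
    (3 <= length F)%nat.
Proof.
  intros HP _ F _ _ Hcw Hcg.
  destruct (le_lt_dec 3 (length F)) as [L|L]; auto. exfalso. apply Hcg.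
  intros a Ha.
  destruct (classic (exists g, In g F /\ covers_pt P g a)) as [Y|N]; auto. exfalso.
  assert (Hwa : ~ walls P a) by (intro W; apply N; apply Hcw; auto).
  assert (NG : forall g, In g F -> exists x, seg g a x /\ exterior P x).
  { intros g Hg. apply not_cov. intro C. apply N. eauto. }
  destruct F as [|g1 [|g2 [|g3 F]]]; simpl in L; try lia.
  - destruct HP as [H3 _].
    destruct (Hcw (vtx P 0)) as [g [[] _]].
    exists 0%nat. split; [lia|]. apply seg_left.
  - destruct (NG g1 (or_introl eq_refl)) as [x [Hs Hx]].
    destruct (chord P a g1 x Ha Hwa Hs Hx) as [d [t0 [t1 [Ht0 [Ht1 [Hnd [Hw0 [Hw1 [Hch [S0 [S1 Hg]]]]]]]]]]].
    destruct (Hcw _ Hw0) as [g [Hin Cg]]. destruct Hin as [<-|[]].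
    apply (Cg x S0); auto.
  - destruct (NG g1 (or_introl eq_refl)) as [x1 [Hs1 Hx1]].
    destruct (NG g2 (or_intror (or_introl eq_refl))) as [x [Hs Hx]].
    destruct (chord P a g2 x Ha Hwa Hs Hx) as [d [t0 [t1 [Ht0 [Ht1 [Hnd [Hw0 [Hw1 [Hch [S0 [S1 Hg]]]]]]]]]]].
    assert (C0 : covers_pt P g1 (lin a d t0)).
    { destruct (Hcw _ Hw0) as [g [Hin Cg]]. destruct Hin as [<-|[<-|[]]]; auto.
      exfalso. apply (Cg x S0); auto. }
    assert (C1 : covers_pt P g1 (lin a d (- t1))).
    { destruct (Hcw _ Hw1) as [g [Hin Cg]]. destruct Hin as [<-|[<-|[]]]; auto.
      exfalso. apply (Cg x S1); auto. }
    apply (final_tri P a d t0 t1 g1 x1); auto.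
Qed.
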